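(* Let $P$ be a poset. If $P$ is well-quasi-ordered and the set $\mathcal{J}^{\neg\downarrow}(P)$ of non-principal ideals of $P$ is a chain under inclusion, then $P$ is better-quasi-ordered.
   Context: An ideal of $P$ is a nonempty initial segment of $P$ which is up-directed; it is principal if it has a largest element. A quasi-ordered set is well-quasi-ordered (wqo) if it is well-founded and has no infinite antichain. Barriers and bqo: finite subsets of $\mathbb{N}$ are identified with their increasing enumerations. For finite $s,t\subseteq\mathbb{N}$ write $s\triangleleft t$ if there is a finite $r\subseteq\mathbb{N}$ such that $s$ is a proper initial segment of $r$ and $t$ is $r$ with its least element removed. A barrier is an infinite set $B$ of finite subsets of $\mathbb{N}$, no member of which is a proper subset of another, such that every infinite $X\subseteq\bigcup B$ has a nonempty initial segment belonging to $B$. A barrier is well-ordered by the lexicographic order; its order type is the type of this well-order. A map $f$ from a barrier $B$ into a quasi-ordered set $Q$ is good if there exist $s,t\in B$ with $s\triangleleft t$ and $f(s)\leq f(t)$, and bad otherwise. For a countable ordinal $\alpha$, $Q$ is $\alpha$-bqo if every map from a barrier of order type at most $\alpha$ into $Q$ is good; $Q$ is better-quasi-ordered (bqo) if it is $\alpha$-bqo for every countable ordinal $\alpha$. *)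

(* Defs.v *)
From mathcomp Require Import all_boot.
Set Implicit Arguments. Unset Strict Implicit. Unset Printing Implicit Defensive.

Section Defs.
Variables (T : Type) (le : T -> T -> Prop).

Definition is_poset : Prop :=
  [/\ (forall x, le x x),
      (forall x y, le x y -> le y x -> x = y) &
      (forall x y z, le x y -> le y z -> le x z)].

Definition lt_of (x y : T) : Prop := le x y /\ ~ le y x.

Definition wqo : Prop :=
  well_founded lt_of /\
  ~ (exists f : nat -> T, forall i j, i <> j -> ~ le (f i) (f j)).

Definition is_ideal (I : T -> Prop) : Prop :=
  [/\ (exists x, I x),
      (forall x y, le x y -> I y -> I x) &
      (forall x y, I x -> I y -> exists2 z, I z & le x z /\ le y z)].

Definition is_principal (I : T -> Prop) : Prop :=
  exists2 m, I m & forall x, I x -> le x m.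

Definition set_incl (I J : T -> Prop) : Prop := forall x, I x -> J x.

Definition nonprincipal_ideals_chain : Prop :=
  forall I J, is_ideal I -> ~ is_principal I ->
              is_ideal J -> ~ is_principal J ->
              set_incl I J \/ set_incl J I.

End Defs.

Definition fin_nat (s : seq nat) : bool := sorted ltn s.

Definition init_seg (s : seq nat) (X : nat -> Prop) : Prop :=
  [/\ s <> [::], fin_nat s, (forall x, x \in s -> X x) &
      (forall x, X x -> x <= last 0 s -> x \in s)].

Definition infinite_nat_set (X : nat -> Prop) : Prop :=
  forall n, exists2 m, n <= m & X m.

Definition shift_rel (s t : seq nat) : Prop :=
  exists r : seq nat, [/\ fin_nat r,
    (exists2 k, k < size r & s = take k r) & t = behead r].

Definition is_barrier (B : seq nat -> Prop) : Prop :=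
  [/\ (forall s, B s -> fin_nat s),
      (forall l : seq (seq nat), exists2 s, B s & s \notin l),
      (forall s t, B s -> B t -> {subset s <= t} -> s = t) &
      (forall X : nat -> Prop, infinite_nat_set X ->
         (forall x, X x -> exists2 s, B s & x \in s) ->
         exists2 s, B s & init_seg s X)].

Definition good_map (T : Type) (le : T -> T -> Prop)
    (B : seq nat -> Prop) (f : seq nat -> T) : Prop :=
  exists s t, [/\ B s, B t, shift_rel s t & le (f s) (f t)].

(** bqo: every map from any barrier is good (every barrier has a countable
    lexicographic order type, so this is "alpha-bqo for all countable alpha"). *)
Definition bqo (T : Type) (le : T -> T -> Prop) : Prop :=
  forall B : seq nat -> Prop, is_barrier B -> forall f : seq nat -> T,
    good_map le B f.

(* Main.v *)
Require Import Defs.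
From mathcomp Require Import all_boot.
From Stdlib Require Import Classical ClassicalEpsilon FunctionalExtensionality.
Set Implicit Arguments. Unset Strict Implicit. Unset Printing Implicit Defensive.

Definition incr (Z : nat -> nat) := forall n, Z n < Z n.+1.
Definition inN (Y : nat -> nat) x := exists k, Y k = x.
Definition sub (Z Y : nat -> nat) := forall n, inN Y (Z n).
Definition shift (Z : nat -> nat) k := fun n => Z (k + n).
Definition catf (s : seq nat) (Z : nat -> nat) :=
  fun n => if n < size s then nth 0 s n else Z (n - size s).

Lemma incr_lt Z i j : incr Z -> i < j -> Z i < Z j.
Proof.
move=> hZ; elim: j => // j IH; rewrite ltnS leq_eqVlt => /orP [/eqP -> //|].
by move=> /IH h; apply: ltn_trans h (hZ j).
Qed.

Lemma incr_le Z i j : incr Z -> i <= j -> Z i <= Z j.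
Proof. by move=> hZ; rewrite leq_eqVlt => /orP [/eqP ->//|/(incr_lt hZ)/ltnW]. Qed.

Lemma incr_ltE Z i j : incr Z -> (Z i < Z j) = (i < j).
Proof.
move=> hZ; case: (ltnP i j) => h; first exact: (incr_lt hZ h).
by rewrite ltnNge (incr_le hZ h).
Qed.

Lemma incr_leE Z i j : incr Z -> (Z i <= Z j) = (i <= j).
Proof. by move=> hZ; rewrite [LHS]leqNgt incr_ltE // -leqNgt. Qed.

Lemma incr_inj Z i j : incr Z -> Z i = Z j -> i = j.
Proof. by move=> hZ e; apply/eqP; rewrite eqn_leq -(incr_leE i j hZ) -(incr_leE j i hZ) e leqnn. Qed.

Lemma incr_ge Z n : incr Z -> n <= Z n.
Proof. move=> hZ; elim: n => // n IH; exact: leq_ltn_trans IH (hZ n). Qed.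

Lemma incr_shift Z k : incr Z -> incr (shift Z k).
Proof. by move=> hZ n; rewrite /shift addnS. Qed.

Lemma sub_refl Z : sub Z Z.
Proof. by move=> n; exists n. Qed.

Lemma sub_trans Z Y X : sub Z Y -> sub Y X -> sub Z X.
Proof. by move=> h1 h2 n; case: (h1 n) => k <-; apply: h2. Qed.

Lemma sub_shift Z k : sub (shift Z k) Z.
Proof. by move=> n; exists (k + n). Qed.

Lemma shift0 Z : shift Z 0 = Z.
Proof. by apply: functional_extensionality => n. Qed.

Lemma shift_shift Z a b : shift (shift Z a) b = shift Z (a + b).
Proof. by apply: functional_extensionality => n; rewrite /shift addnA. Qed.

Lemma sub_first Z Y : incr Y -> sub Z Y -> Y 0 <= Z 0.
Proof. by move=> hY h; case: (h 0) => k <-; apply: incr_le. Qed.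

Lemma sub_above Z Y j : incr Y -> sub Z Y -> (forall n, Y j < Z n) ->
  sub Z (shift Y j.+1).
Proof.
move=> hY h ha n; case: (h n) => m e; have := ha n; rewrite -e incr_ltE // => hm.
by exists (m - j.+1); rewrite /shift subnKC.
Qed.

Lemma mkseq_sorted Z k : incr Z -> sorted ltn (mkseq Z k).
Proof.
move=> hZ; rewrite /mkseq sorted_map.
apply: sub_sorted (iota_ltn_sorted 0 k) => x y /= h; exact: incr_lt hZ h.
Qed.

Lemma mem_mkseqP (Z : nat -> nat) k y : reflect (exists2 j, j < k & Z j = y) (y \in mkseq Z k).
Proof.
apply: (iffP mapP).
  by case=> j; rewrite mem_iota add0n => /andP [_ hj] ->; exists j.
by case=> j hj <-; exists j => //; rewrite mem_iota add0n.
Qed.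

Lemma take_mkseq (Z : nat -> nat) a b : a <= b -> take a (mkseq Z b) = mkseq Z a.
Proof.
move=> hab; rewrite /mkseq -(subnKC hab) iotaD map_cat take_size_cat //.
by rewrite size_map size_iota.
Qed.

Lemma mkseq_eqP (Z Z' : nat -> nat) k : (forall i, i < k -> Z i = Z' i) -> mkseq Z k = mkseq Z' k.
Proof.
move=> h; apply: (@eq_from_nth _ 0); rewrite !size_mkseq // => i hi.
by rewrite !nth_mkseq // h.
Qed.

Lemma mkseq_eqE (Z Z' : nat -> nat) k i : mkseq Z k = mkseq Z' k -> i < k -> Z i = Z' i.
Proof. by move=> e hi; rewrite -(nth_mkseq 0 Z hi) e nth_mkseq. Qed.

Lemma catf_lt s Z n : n < size s -> catf s Z n = nth 0 s n.
Proof. by rewrite /catf => ->. Qed.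

Lemma catf_ge s Z n : catf s Z (size s + n) = Z n.
Proof. by rewrite /catf ltnNge leq_addr /= addKn. Qed.

Lemma mkseq_catf s Z : mkseq (catf s Z) (size s) = s.
Proof.
apply: (@eq_from_nth _ 0); rewrite size_mkseq // => i hi.
by rewrite nth_mkseq // catf_lt.
Qed.

Lemma mkseq_catf_add s Z k : mkseq (catf s Z) (size s + k) = s ++ mkseq Z k.
Proof.
apply: (@eq_from_nth _ 0); rewrite ?size_cat !size_mkseq // => i hi.
rewrite nth_mkseq // nth_cat; case: (ltnP i (size s)) => h; first by rewrite catf_lt.
rewrite nth_mkseq; last by rewrite ltn_subLR.
by rewrite -{1}(subnKC h) catf_ge.
Qed.

Lemma shift_catf s Z : shift (catf s Z) (size s) = Z.
Proof. by apply: functional_extensionality => n; rewrite /shift catf_ge. Qed.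

Lemma catf_mkseq_shift Z k : catf (mkseq Z k) (shift Z k) = Z.
Proof.
apply: functional_extensionality => n; rewrite /catf size_mkseq.
case: ltnP => h; first by rewrite nth_mkseq.
by rewrite /shift subnKC.
Qed.

Lemma catf_nil Z : catf [::] Z = Z.
Proof. by apply: functional_extensionality => n; rewrite /catf /= subn0. Qed.

Lemma catf_rcons s x Z : catf (rcons s x) Z = catf s (catf [:: x] Z).
Proof.
apply: functional_extensionality => n; rewrite /catf size_rcons /=.
case: (ltnP n (size s)) => h.
  by rewrite nth_rcons h (ltn_trans h (ltnSn _)).
rewrite -(subnKC h) addKn; case: (n - size s) => [|m].
  by rewrite addn0 ltnSn nth_rcons ltnn eqxx.
by rewrite addnS ltnS ltnNge leq_addr /= subSS addKn subn1.
Qed.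

Lemma shift1_catf1 x Z : shift (catf [:: x] Z) 1 = Z.
Proof. by rewrite -[1]/(size [:: x]) shift_catf. Qed.

Lemma catf_rcons_shift s Z : catf (rcons s (Z 0)) (shift Z 1) = catf s Z.
Proof.
rewrite catf_rcons; congr catf; apply: functional_extensionality => n.
by case: n => [|n] //; rewrite /catf /= subn1 /shift.
Qed.

Lemma incr_catf s Z : sorted ltn s -> (forall y, y \in s -> y < Z 0) -> incr Z ->
  incr (catf s Z).
Proof.
move=> hs hlt hZ n; rewrite /catf.
case: (ltnP n.+1 (size s)) => h1.
  rewrite (ltn_trans (ltnSn n) h1).
  by apply: (sorted_ltn_nth ltn_trans 0 hs); rewrite ?inE ?(ltn_trans (ltnSn n) h1).
case: (ltnP n (size s)) => h2.
  have e : n.+1 = size s by apply/eqP; rewrite eqn_leq h1 h2.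
  by rewrite e subnn; apply: hlt; rewrite mem_nth.
by rewrite subSn // hZ.
Qed.

Lemma sub_catf s Z Y : (forall y, y \in s -> inN Y y) -> sub Z Y -> sub (catf s Z) Y.
Proof.
move=> hs hZ n; rewrite /catf; case: ltnP => h; last exact: hZ.
by apply: hs; rewrite mem_nth.
Qed.

Lemma mem_behead_cons (z y : nat) s : z \in s -> z \in y :: s.
Proof. by move=> hz; rewrite inE hz orbT. Qed.

Lemma sorted_subset_subseq (s l : seq nat) : sorted ltn s -> sorted ltn l ->
  {subset s <= l} -> subseq s l.
Proof.
elim: l s => [|x l IH] s hs hl hsub.
  by case: s hs hsub => // y s _ /(_ y (mem_head _ _)).
have hl' : sorted ltn l := path_sorted hl.
have hxl : forall z, z \in l -> x < z.
  by move=> z hz; move: hl => /= hp; have := order_path_min ltn_trans hp; move=> /allP; apply.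
case: s hs hsub => // y s hs hsub /=.
have hy := hsub y (mem_head _ _).
have hsy : forall z, z \in s -> y < z.
  by move=> z hz; have := order_path_min ltn_trans hs; move=> /allP; apply.
case: eqP => [e|ne].
  subst y; apply: IH => //; first exact: path_sorted hs.
  move=> z hz; have := hsub z (@mem_behead_cons _ _ _ hz); rewrite inE => /orP [/eqP e|//].
  by have := hsy z hz; rewrite e ltnn.
apply: IH => //.
move=> z; rewrite inE => /orP [/eqP ->|hz].
  by move: hy; rewrite inE => /orP [/eqP e|//].
have := hsub z (@mem_behead_cons _ _ _ hz); rewrite inE => /orP [/eqP e|//].
move: hy; rewrite inE => /orP [/eqP e'|hy]; first by [].
by have := hxl y hy; have := hsy z hz; rewrite e => h1 h2; have := ltn_trans h1 h2; rewrite ltnn.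
Qed.

Lemma subseq_mkseq N s k : incr N -> sorted ltn s ->
  (forall y, y \in s -> exists2 j, j < k & N j = y) -> subseq s (mkseq N k).
Proof.
move=> hN hs h; apply: sorted_subset_subseq => //; first exact: mkseq_sorted.
by move=> y /h [j hj e]; apply/mem_mkseqP; exists j.
Qed.

Lemma subseq_mkseqE N s k : incr N -> subseq s (mkseq N k) ->
  sorted ltn s /\ (forall y, y \in s -> exists2 j, j < k & N j = y).
Proof.
move=> hN hsub; split; first exact: (subseq_sorted ltn_trans hsub (mkseq_sorted k hN)).
by move=> y /(mem_subseq hsub) /mem_mkseqP.
Qed.

Lemma exists_incr (P : nat -> Prop) : (forall n, exists m, n <= m /\ P m) ->
  exists Y, incr Y /\ forall k, P (Y k).
Proof.
move=> h; have [g hg] : exists g : nat -> nat, forall n, n <= g n /\ P (g n).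
  by apply: (choice (fun n m => n <= m /\ P m)).
pose Y := fix Y k := if k is k'.+1 then g (Y k').+1 else g 0.
exists Y; split; last by case=> [|k] /=; apply (hg _).2.
by move=> n /=; apply: (hg _).1.
Qed.

Lemma nimp1 (P Q : Prop) : ~ (P -> Q) -> P.
Proof. by move=> h; apply: NNPP => hp; apply: h => /hp. Qed.

Lemma nimp2 (P Q : Prop) : ~ (P -> Q) -> ~ Q.
Proof. by move=> h hq; apply: h. Qed.

Lemma dense_list Y (Q : seq nat -> (nat -> nat) -> Prop) :
  (forall s R R', Q s R -> incr R' -> sub R' R -> Q s R') ->
  (forall s R, incr R -> sub R Y -> exists R', [/\ incr R', sub R' R & Q s R']) ->
  forall l R, incr R -> sub R Y ->
  exists R', [/\ incr R', sub R' R & forall s, subseq s l -> Q s R'].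
Proof.
move=> hered dense l; elim: l Q hered dense => [|x l IH] Q hered dense R hR hRY.
  case: (dense [::] R hR hRY) => R' [h1 h2 h3]; exists R'; split=> // s.
  by rewrite subseq0 => /eqP ->.
case: (IH Q hered dense R hR hRY) => R1 [h1 h2 h3].
have hRY1 : sub R1 Y := sub_trans h2 hRY.
case: (IH (fun s => Q (x :: s)) (fun s => hered (x :: s)) (fun s => dense (x :: s))
  R1 h1 hRY1) => R2 [g1 g2 g3].
exists R2; split => //; first exact: sub_trans g2 h2.
case=> [|y s] /=.
  by move=> _; apply: hered (h3 [::] (sub0seq l)) g1 g2.
case: eqP => [-> hs| _ hs]; first exact: g3.
exact: hered (h3 _ hs) g1 g2.
Qed.

Section Fusion.
Variables (Y : nat -> nat) (Q : seq nat -> (nat -> nat) -> Prop).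
Hypothesis hered : forall s R R', Q s R -> incr R' -> sub R' R -> Q s R'.
Hypothesis dense : forall s R, incr R -> sub R Y ->
  exists R', [/\ incr R', sub R' R & Q s R'].

Definition pickR (l : seq nat) (R : nat -> nat) : nat -> nat :=
  match excluded_middle_informative (incr R /\ sub R Y) with
  | left h => proj1_sig (constructive_indefinite_description _
                 (dense_list hered dense l (proj1 h) (proj2 h)))
  | right _ => R end.

Lemma pickR_spec l R : incr R -> sub R Y ->
  [/\ incr (pickR l R), sub (pickR l R) R & forall s, subseq s l -> Q s (pickR l R)].
Proof.
move=> hR hRY; rewrite /pickR; case: excluded_middle_informative => [h|[]//].
by case: constructive_indefinite_description => R' /= [].
Qed.

Variable Y0 : nat -> nat.
Hypotheses (hY0 : incr Y0) (hY0Y : sub Y0 Y).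

Fixpoint st (k : nat) : seq nat * (nat -> nat) :=
  if k is k'.+1 then
    let: (ys, R) := st k' in let R' := pickR ys R in (rcons ys (R' 0), shift R' 1)
  else ([::], Y0).

Definition Rp k := pickR (st k).1 (st k).2.
Definition Nf k := Rp k 0.

Lemma st_S k : st k.+1 = (rcons (st k).1 (Nf k), shift (Rp k) 1).
Proof. by rewrite /Nf /Rp /=; case: (st k). Qed.

Lemma st_inv k : [/\ incr (st k).2, sub (st k).2 Y0 & (st k).1 = mkseq Nf k].
Proof.
elim: k => [|k [h1 h2 h3]]; first by split => //; exact: sub_refl.
have hY : sub (st k).2 Y := sub_trans h2 hY0Y.
have [g1 g2 g3] := pickR_spec (st k).1 h1 hY.
rewrite st_S /=; split.
- exact: incr_shift.
- exact: sub_trans (sub_shift _ _) (sub_trans g2 h2).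
- by rewrite h3 mkseqS.
Qed.

Lemma Rp_spec k : [/\ incr (Rp k), sub (Rp k) Y0 &
  forall s, subseq s (mkseq Nf k) -> Q s (Rp k)].
Proof.
have [h1 h2 h3] := st_inv k.
have [g1 g2 g3] := pickR_spec (st k).1 h1 (sub_trans h2 hY0Y).
by split => //; [exact: sub_trans g2 h2 | rewrite -h3].
Qed.

Lemma Rp_sub k n : sub (Rp (k + n)) (Rp k).
Proof.
elim: n => [|n IH]; first by rewrite addn0; exact: sub_refl.
apply: (sub_trans _ IH); rewrite addnS.
have [h1 h2 _] := st_inv (k + n).+1.
have [g1 g2 g3] := pickR_spec (st (k + n).+1).1 h1 (sub_trans h2 hY0Y).
apply: (sub_trans g2); rewrite st_S /=; exact: sub_shift.
Qed.

Lemma Nf_incr : incr Nf.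
Proof.
move=> k; rewrite /Nf.
have [h1 h2 _] := st_inv k.+1.
have [g1 g2 g3] := pickR_spec (st k.+1).1 h1 (sub_trans h2 hY0Y).
case: (g2 0) => m e.
change (Rp k 0 < pickR (st k.+1).1 (st k.+1).2 0); rewrite -e st_S /shift /=.
by have [r1 _ _] := Rp_spec k; apply: incr_lt r1 _.
Qed.

Lemma shiftN_sub k : sub (shift Nf k) (Rp k).
Proof.
move=> n; have := Rp_sub k n => h; case: (h 0) => m e.
by exists m; rewrite e.
Qed.

Lemma fusion_main : [/\ incr Nf, sub Nf Y0 &
  forall k s, subseq s (mkseq Nf k) -> Q s (shift Nf k)].
Proof.
split; first exact: Nf_incr.
  move=> k; have [_ h _] := Rp_spec k; exact: h 0.
move=> k s hs; have [h1 _ h3] := Rp_spec k.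
apply: hered (h3 s hs) (incr_shift k Nf_incr) (shiftN_sub k).
Qed.
End Fusion.

Lemma fusion Y (Q : seq nat -> (nat -> nat) -> Prop) :
  (forall s R R', Q s R -> incr R' -> sub R' R -> Q s R') ->
  (forall s R, incr R -> sub R Y -> exists R', [/\ incr R', sub R' R & Q s R']) ->
  forall Y0, incr Y0 -> sub Y0 Y ->
  exists N, [/\ incr N, sub N Y0 & forall k s, subseq s (mkseq N k) -> Q s (shift N k)].
Proof.
move=> hered dense Y0 h1 h2; exists (Nf hered dense Y0).
exact: fusion_main.
Qed.

Lemma mem_le_sumn (s : seq nat) y : y \in s -> y <= sumn s.
Proof.
elim: s => // x s IH; rewrite inE => /orP [/eqP ->|/IH h] /=; first exact: leq_addr.
exact: leq_trans h (leq_addl _ _).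
Qed.

Lemma subseq_exists N s : incr N -> sorted ltn s -> (forall y, y \in s -> inN N y) ->
  exists k, subseq s (mkseq N k).
Proof.
move=> hN hs h; exists (sumn s).+1; apply: subseq_mkseq => // y hy.
case: (h y hy) => j e; exists j => //; rewrite ltnS.
have hj : N j \in s by rewrite e.
exact: leq_trans (incr_ge j hN) (mem_le_sumn hj).
Qed.

Lemma sorted_rcons_lt (s : seq nat) x : sorted ltn (rcons s x) -> forall y, y \in s -> y < x.
Proof.
elim: s => // a s IH /= hp y; rewrite inE => /orP [/eqP ->|hy].
  have := order_path_min ltn_trans hp; move=> /allP; apply.
  by rewrite mem_rcons mem_head.
exact: IH (path_sorted hp) y hy.
Qed.

Lemma sorted_rcons_sorted (s : seq nat) x : sorted ltn (rcons s x) -> sorted ltn s.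
Proof.
move=> h; apply: (subseq_sorted ltn_trans _ h).
by rewrite -cats1 prefix_subseq.
Qed.

Definition hasG (G : seq nat -> Prop) (Z : nat -> nat) := exists k, G (mkseq Z k).

Section NW.
Variable G : seq nat -> Prop.
Definition acc s R := forall Z, incr Z -> sub Z R -> hasG G (catf s Z).
Definition rej s R := forall R', incr R' -> sub R' R -> ~ acc s R'.

Lemma acc_hered s R R' : acc s R -> sub R' R -> acc s R'.
Proof. by move=> h hs Z hZ hZs; apply: h hZ (sub_trans hZs hs). Qed.

Lemma rej_hered s R R' : rej s R -> sub R' R -> rej s R'.
Proof. by move=> h hs R'' h1 h2; apply: h h1 (sub_trans h2 hs). Qed.

Lemma sub_shift_le N a b : a <= b -> sub (shift N b) (shift N a).
Proof. by move=> hab n; exists (b - a + n); rewrite /shift addnA subnKC. Qed.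

Variable Y : nat -> nat.
Hypothesis hY : incr Y.

Lemma NW : exists N, [/\ incr N, sub N Y &
  (forall Z, incr Z -> sub Z N -> ~ hasG G Z) \/
  (forall Z, incr Z -> sub Z N -> hasG G Z)].
Proof.
pose Q1 s R := acc s R \/ rej s R.
have he1 : forall s R R', Q1 s R -> incr R' -> sub R' R -> Q1 s R'.
  by move=> s R R' [h|h] _ hs; [left; apply: acc_hered h hs| right; apply: rej_hered h hs].
have de1 : forall s R, incr R -> sub R Y -> exists R', [/\ incr R', sub R' R & Q1 s R'].
  move=> s R hR _; case: (classic (rej s R)) => h.
    by exists R; split => //; [exact: sub_refl | right].
  move: h; rewrite /rej => /not_all_ex_not [R' h].
  have hR' : incr R' := nimp1 h.
  have h2 := nimp2 h.
  have hs : sub R' R := nimp1 h2.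
  have ha : acc s R' := NNPP _ (nimp2 h2).
  by exists R'; split => //; left.
have [N1 [hN1 hN1Y hQ1]] := fusion he1 de1 hY (sub_refl Y).
case: (hQ1 0 [::] (sub0seq _)); rewrite shift0 => hA.
  exists N1; split => //; right => Z hZ hZN; have := hA Z hZ hZN; by rewrite catf_nil.
pose rejd s := (exists k, subseq s (mkseq N1 k)) /\
  forall k, subseq s (mkseq N1 k) -> rej s (shift N1 k).
have rcons_sub : forall s k j, subseq s (mkseq N1 k) -> k <= j ->
    subseq (rcons s (N1 j)) (mkseq N1 j.+1).
  move=> s k j hs hkj; have [ss hy] := subseq_mkseqE hN1 hs.
  apply: subseq_mkseq => //.
    case: s hs ss hy => // a s hs ss hy; rewrite /= rcons_path; apply/andP; split; first exact: ss.
    have [i hi <-] := hy (last a s) (mem_last a s); apply: incr_lt hN1 _.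
    exact: leq_trans hi hkj.
  move=> y; rewrite mem_rcons inE => /orP [/eqP ->|/hy [i hi <-]]; first by exists j.
  by exists i => //; apply: leq_trans hi (leq_trans hkj _).
have L4 : forall s k, subseq s (mkseq N1 k) -> rej s (shift N1 k) ->
    exists K, forall j, K <= j -> k <= j -> rej (rcons s (N1 j)) (shift N1 j.+1).
  move=> s k hs hr; apply: NNPP => hne.
  have hinf : forall K, exists j, K <= j /\
      (k <= j /\ acc (rcons s (N1 j)) (shift N1 j.+1)).
    move=> K; move: hne => /not_ex_all_not /(_ (maxn K k)) /not_all_ex_not [j hj].
    have hKj := nimp1 hj; have hj2 := nimp2 hj.
    have hkj := nimp1 hj2; have hj3 := nimp2 hj2.
    exists j; split; first exact: leq_trans (leq_maxl _ _) hKj.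
    have hkj' : k <= j := leq_trans (leq_maxr _ _) hKj.
    split => //; case: (hQ1 j.+1 _ (rcons_sub s k j hs hkj')) => // hh.
  have [J [hJ hPJ]] := exists_incr hinf.
  pose W i := N1 (J i).
  have hW : incr W by move=> i; apply: incr_lt hN1 (hJ i).
  apply: (hr W hW).
    move=> i; exists (J i - k); rewrite /shift subnKC //; exact: (hPJ i).1.
  move=> Z hZ hZW; case: (hZW 0) => i e.
  have hsh : sub (shift Z 1) (shift N1 (J i).+1).
    apply: sub_above => //.
      by move=> n; rewrite /shift; case: (hZW (1 + n)) => i' <-; exists (J i').
    move=> n; rewrite /shift; change (W i < Z (1 + n)); rewrite e.
    exact: incr_lt hZ _.
  have := (hPJ i).2 (shift Z 1) (incr_shift 1 hZ) hsh.
  by rewrite -/(W i) e catf_rcons_shift.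
pose Q2 (s : seq nat) (R : nat -> nat) := rejd s -> forall n j, R n = N1 j -> rej (rcons s (N1 j)) (shift N1 j.+1).
have he2 : forall s R R', Q2 s R -> incr R' -> sub R' R -> Q2 s R'.
  move=> s R R' h _ hs; rewrite /Q2 => hr n j e; case: (hs n) => m e'.
  by apply: (h hr m j); rewrite e' e.
have de2 : forall s R, incr R -> sub R N1 -> exists R', [/\ incr R', sub R' R & Q2 s R'].
  move=> s R hR _; case: (classic (rejd s)) => hrs; last first.
    exists R; split; [done|exact: sub_refl|]; by rewrite /Q2 => /hrs.
  have [[k hk] hrk] := hrs.
  have [K hK] := L4 s k hk (hrk k hk).
  exists (shift R (N1 (maxn K k))); split; [exact: incr_shift | exact: sub_shift |].
  move=> _ n j e.
  have hle : N1 (maxn K k) <= N1 j.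
    rewrite -e /shift; apply: leq_trans (leq_addr n _) (incr_ge _ hR).
  rewrite incr_leE // geq_max in hle; case/andP: hle => h1 h2.
  exact: hK.
have [N2 [hN2 hN2N1 hQ2]] := fusion he2 de2 hN1 (sub_refl N1).
have hrej : forall s, (exists k, subseq s (mkseq N2 k)) -> rejd s.
  elim/last_ind => [_|s x IH [k hk]].
    split; first by exists 0.
    by move=> k _; apply: rej_hered hA (sub_shift N1 k).
  have [ss hy] := subseq_mkseqE hN2 hk.
  have hx : x \in rcons s x by rewrite mem_rcons mem_head.
  have [i hi ex] := hy x hx.
  have hsx := sorted_rcons_lt ss.
  have hin : forall y, y \in s -> y \in rcons s x by move=> y hys; rewrite mem_rcons inE hys orbT.
  have ss' : sorted ltn s := sorted_rcons_sorted ss.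
  have hsi : subseq s (mkseq N2 i).
    apply: subseq_mkseq => // y hys.
    have [i' hi' ey] := hy y (hin y hys).
    exists i' => //; rewrite -(incr_ltE _ _ hN2) ey ex; exact: hsx.
  have rs := IH (ex_intro _ i hsi).
  have [j ej] := hN2N1 i.
  have hrj : rej (rcons s (N1 j)) (shift N1 j.+1).
    by apply: (hQ2 i s hsi rs 0 j); rewrite /shift addn0 ej.
  have e2 : x = N1 j by rewrite ej.
  have hyN1 : forall y, y \in s -> exists2 j', j' < j & N1 j' = y.
    move=> y hys; have [i' _ ey] := hy y (hin y hys).
    have [j' ej'] := hN2N1 i'; exists j'; last by rewrite ej' ey.
    by rewrite -(incr_ltE _ _ hN1) ej' ey -e2; exact: hsx.
  split.
    exists j.+1; apply: subseq_mkseq => // y; rewrite mem_rcons inE => /orP [/eqP ->|hys].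
      by exists j.
    by have [j' hj' ?] := hyN1 y hys; exists j' => //; apply: ltn_trans hj' _.
  move=> k' hk'; have [_ hy'] := subseq_mkseqE hN1 hk'.
  have [j'' hj'' ej''] := hy' x hx.
  have ejj : j'' = j by apply: (incr_inj hN1); rewrite ej'' e2.
  rewrite e2; apply: rej_hered hrj (sub_shift_le _ _); by rewrite -ejj.
exists N2; split => //; first exact: sub_trans hN2N1 hN1Y.
left => Z hZ hZN [L hL].
have hs : sorted ltn (mkseq Z L) := mkseq_sorted L hZ.
have [k hk] : exists k, subseq (mkseq Z L) (mkseq N2 k).
  apply: subseq_exists => // y /mem_mkseqP [i _ <-]; exact: hZN i.
have [[k' hk'] hr] := hrej _ (ex_intro _ k hk).
apply: (hr k' hk' (shift N1 k') (incr_shift k' hN1) (sub_refl _)).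
move=> Z' _ _; exists L.
by have := mkseq_catf (mkseq Z L) Z'; rewrite size_mkseq => ->.
Qed.
End NW.

Lemma NWc Y (c : (nat -> nat) -> Prop) : incr Y ->
  (forall Z, incr Z -> sub Z Y -> exists k, forall Z', incr Z' -> sub Z' Y ->
      mkseq Z' k = mkseq Z k -> (c Z' <-> c Z)) ->
  exists N, [/\ incr N, sub N Y &
    (forall Z, incr Z -> sub Z N -> c Z) \/ (forall Z, incr Z -> sub Z N -> ~ c Z)].
Proof.
move=> hY hc.
pose G w := forall Z', incr Z' -> sub Z' Y -> mkseq Z' (size w) = w -> c Z'.
have [N [hN hNY [h|h]]] := NW G hY; exists N; split => //.
  right => Z hZ hZN cZ; apply: (h Z hZ hZN).
  have hZY := sub_trans hZN hNY.
  have [k hk] := hc Z hZ hZY; exists k => Z' h1 h2; rewrite size_mkseq => e.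
  by apply/(hk Z' h1 h2 e).
left => Z hZ hZN; have [k hk] := h Z hZ hZN.
apply: hk => //; [exact: sub_trans hZN hNY | by rewrite size_mkseq].
Qed.


Lemma wf_no_chain A (R : A -> A -> Prop) : well_founded R ->
  forall a : nat -> A, ~ (forall n, R (a n.+1) (a n)).
Proof.
move=> wf a.
suff H : forall x, Acc R x -> forall b : nat -> A, b 0 = x -> ~ (forall n, R (b n.+1) (b n)).
  exact: H (a 0) (wf _) a erefl.
move=> x; elim => {}x _ IH b e h.
apply: (IH (b 1) _ (fun n => b n.+1) erefl) => [|n]; first by rewrite -e; exact: h 0.
exact: h n.+1.
Qed.

Lemma wf_of_no_chain A (R : A -> A -> Prop) :
  (forall a : nat -> A, ~ (forall n, R (a n.+1) (a n))) -> well_founded R.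
Proof.
move=> h x; apply: NNPP => hx.
have step : forall y : {y | ~ Acc R y}, {z : {z | ~ Acc R z} | R (proj1_sig z) (proj1_sig y)}.
  move=> [y hy]; apply: constructive_indefinite_description.
  apply: NNPP => hn; have hy' := hy; apply: hy'; constructor => z hz; apply: NNPP => hz'.
  by apply: hn; exists (exist _ z hz').
pose b := fix b n := if n is n'.+1 then proj1_sig (step (b n')) else exist _ x hx.
apply: (h (fun n => proj1_sig (b n))) => n /=.
exact: proj2_sig (step (b n)).
Qed.

Definition thin (F : seq nat -> Prop) :=
  forall u v, F u -> F v -> u = take (size u) v -> u = v.

Definition front (F : seq nat -> Prop) (Y : nat -> nat) :=
  [/\ forall u, F u -> sorted ltn u /\ (forall y, y \in u -> inN Y y),
      thin F &
      forall Z, incr Z -> sub Z Y -> exists k, F (mkseq Z k)].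

Definition Rf (C F : seq nat -> Prop) :=
  (exists Y, incr Y /\ front C Y) /\ exists x, forall w, C w -> F (x :: w).

Lemma Rf_wf : well_founded Rf.
Proof.
apply: wf_of_no_chain => a ha.
have [xs hxs] : exists xs : nat -> nat, forall n w, a n.+1 w -> a n (xs n :: w).
  apply: (choice (fun n x => forall w, a n.+1 w -> a n (x :: w))) => n.
  by have [_ [x hx]] := ha n; exists x.
have [Ys hYs] : exists Ys : nat -> nat -> nat, forall n, incr (Ys n) /\ front (a n.+1) (Ys n).
  apply: (choice (fun n Y => incr Y /\ front (a n.+1) Y)) => n.
  by have [[Y hY] _] := ha n; exists Y.
pose g i := xs i.+1.
have hchain : forall n w, a n.+1 w -> a 1 (mkseq g n ++ w).
  elim=> [|n IH] w hw //.
  by have := IH _ (hxs n.+1 w hw); rewrite mkseqS cat_rcons.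
have hne : forall n, exists w, a n.+1 w.
  move=> n; have [h1 [_ _ h3]] := hYs n.
  by have [k hk] := h3 (Ys n) h1 (sub_refl _); exists (mkseq (Ys n) k).
pose Y1 := Ys 0; have [hY1 [fr1 fr2 fr3]] := hYs 0.
have hsrt : forall n, sorted ltn (mkseq g n).
  move=> n; have [w hw] := hne n; have [hs _] := fr1 _ (hchain n w hw).
  by apply: (subseq_sorted ltn_trans _ hs); exact: prefix_subseq.
have hg : incr g.
  move=> i; have := hsrt i.+2; rewrite mkseqS => /sorted_rcons_lt; apply.
  by rewrite mkseqS mem_rcons mem_head.
have hgY : sub g Y1.
  move=> i; have [w hw] := hne i.+1; have [_ hin] := fr1 _ (hchain i.+1 w hw).
  by apply: hin; rewrite mem_cat mkseqS mem_rcons mem_head.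
have [k hk] := fr3 g hg hgY.
have [w hw] := hne k.+1.
have e := fr2 _ _ hk (hchain k.+1 w hw).
have ht : mkseq g k = take (size (mkseq g k)) (mkseq g k.+1 ++ w).
  by rewrite size_mkseq take_cat size_mkseq ltnSn take_mkseq.
have := congr1 size (e ht); rewrite size_cat !size_mkseq => /eqP.
by rewrite -addn1 -addnA -{1}[k]addn0 eqn_add2l.
Qed.

Lemma last_mkseq (Z : nat -> nat) L : last 0 (mkseq Z L.+1) = Z L.
Proof. by rewrite mkseqS last_rcons. Qed.

Lemma mkseq_le_last Z L y : incr Z -> y \in mkseq Z L.+1 -> y <= Z L.
Proof. by move=> hZ /mem_mkseqP [i hi <-]; apply: incr_le. Qed.

Section Main.
Variables (T : Type) (le : T -> T -> Prop).
Hypothesis hpo : is_poset le.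
Hypothesis hwqo : wqo le.
Hypothesis hchain : nonprincipal_ideals_chain le.

Lemma le_refl x : le x x. Proof. by case: hpo. Qed.
Lemma le_anti x y : le x y -> le y x -> x = y. Proof. by case: hpo => _ h _; apply: h. Qed.
Lemma le_trans x y z : le x y -> le y z -> le x z. Proof. by case: hpo => _ _ h; apply: h. Qed.

Lemma no_bad_seq (x : nat -> T) : ~ (forall i j, i < j -> ~ le (x i) (x j)).
Proof.
move=> hbad; have [hwf hna] := hwqo.
pose c (Z : nat -> nat) := lt_of le (x (Z 1)) (x (Z 0)).
have hid : incr (fun n => n) by move=> n.
have hc : forall Z, incr Z -> sub Z (fun n => n) -> exists k, forall Z', incr Z' ->
    sub Z' (fun n => n) -> mkseq Z' k = mkseq Z k -> (c Z' <-> c Z).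
  move=> Z _ _; exists 2 => Z' _ _ e.
  by rewrite /c (mkseq_eqE (i:=0) e isT) (mkseq_eqE (i:=1) e isT).
have [N [hN _ [h|h]]] := NWc hid hc.
  have := wf_no_chain hwf (a:=fun n => x (N n)); apply => n.
  have := h (shift N n) (incr_shift n hN) (sub_shift N n).
  by rewrite /c /shift addn1 addn0.
apply: hna; exists (fun n => x (N n)) => i j hij.
case: (ltngtP i j) => [hlt|hgt|heq].
- exact: hbad (incr_lt hN hlt).
- pose Z := catf [:: N j] (shift N i).
  have hZ : incr Z.
    apply: incr_catf => //; last exact: incr_shift.
    by move=> y; rewrite inE => /eqP ->; rewrite /shift addn0; apply: incr_lt hN hgt.
  have hZN : sub Z N.
    apply: sub_catf; last exact: sub_shift.
    by move=> y; rewrite inE => /eqP ->; exists j.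
  have := h Z hZ hZN; rewrite /c /Z /catf /= /shift addn0 => hn hle.
  by apply: hn; split => // hle'; apply: (hbad _ _ (incr_lt hN hgt)).
- by move: hij; rewrite heq.
Qed.

Definition downclosed (D : T -> Prop) := forall x y, le x y -> D y -> D x.
Definition sdown (D' D : T -> Prop) :=
  [/\ downclosed D', forall x, D' x -> D x & exists x, D x /\ ~ D' x].

Lemma sdown_wf : well_founded sdown.
Proof.
apply: wf_of_no_chain => a ha.
have [x hx] : exists x : nat -> T, forall n, a n (x n) /\ ~ a n.+1 (x n).
  apply: (choice (fun n y => a n y /\ ~ a n.+1 y)) => n.
  by have [_ _ [y hy]] := ha n; exists y.
have hsub : forall m k y, a (m + k) y -> a m y.
  move=> m; elim=> [|k IH] y; first by rewrite addn0.
  by rewrite addnS => hy; apply: IH; have [_ h _] := ha (m + k); apply: h.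
have := no_bad_seq (x:=x); apply => i j hij hle.
have hj : a i.+1 (x j) by apply: (hsub i.+1 (j - i.+1)); rewrite subnKC //; exact: (hx j).1.
have [hd _ _] := ha i.
exact: (hx i).2 (hd _ _ hle hj).
Qed.

Definition goodF (F : seq nat -> Prop) := forall Y, incr Y -> front F Y ->
  forall f : seq nat -> T, exists Z u v, [/\ incr Z, sub Z Y, F u & F v] /\
    [/\ u = mkseq Z (size u), v = mkseq (shift Z 1) (size v) & le (f u) (f v)].

Definition ismax (D : T -> Prop) m := D m /\ forall x, D x -> le x m.

Section Step.
Variables (F : seq nat -> Prop) (Y : nat -> nat) (f : seq nat -> T).
Hypotheses (hY : incr Y) (hF : front F Y).
Hypothesis IH : forall C, Rf C F -> goodF C.
Hypothesis bad : forall Z u v, incr Z -> sub Z Y -> F u -> F v ->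
  u = mkseq Z (size u) -> v = mkseq (shift Z 1) (size v) -> ~ le (f u) (f v).
Hypothesis Fnil : ~ F [::].

Lemma hFthin : thin F. Proof. by case: hF. Qed.
Lemma hFpre Z : incr Z -> sub Z Y -> exists k, F (mkseq Z k).
Proof. by case: hF => _ _ h; apply: h. Qed.
Lemma hFel u : F u -> sorted ltn u /\ (forall y, y \in u -> inN Y y).
Proof. by case: hF => h _ _; apply: h. Qed.

Definition ik (Z : nat -> nat) : nat :=
  match excluded_middle_informative (exists k, F (mkseq Z k)) with
  | left h => proj1_sig (constructive_indefinite_description _ h)
  | right _ => 0 end.
Definition iF Z := mkseq Z (ik Z).

Lemma iF_F Z : (exists k, F (mkseq Z k)) -> F (iF Z).
Proof.
rewrite /iF /ik; case: excluded_middle_informative => // h _.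
by case: constructive_indefinite_description.
Qed.

Lemma thin_mkseq Z a b : F (mkseq Z a) -> F (mkseq Z b) -> a = b.
Proof.
wlog hab : a b / a <= b => [H ha hb|ha hb].
  by case: (leqP a b) => h; [apply: H | apply/esym; apply: H => //; apply: ltnW].
have := hFthin ha hb; rewrite size_mkseq take_mkseq // => /(_ erefl) /(congr1 size).
by rewrite !size_mkseq.
Qed.

Lemma iF_uniq Z k : F (mkseq Z k) -> iF Z = mkseq Z k.
Proof.
move=> h; have h' := iF_F (ex_intro _ k h).
by rewrite /iF (thin_mkseq h' h).
Qed.

Lemma iF_Fi Z : incr Z -> sub Z Y -> F (iF Z).
Proof. by move=> h1 h2; apply: iF_F; apply: hFpre. Qed.

Lemma ik_pos Z : incr Z -> sub Z Y -> 0 < ik Z.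
Proof. by move=> h1 h2; have := iF_Fi h1 h2; rewrite /iF; case: (ik Z). Qed.

Lemma iF_ext Z Z' : incr Z -> sub Z Y -> mkseq Z' (ik Z) = iF Z -> iF Z' = iF Z.
Proof. by move=> h1 h2 e; rewrite (@iF_uniq Z' (ik Z)) // e; apply: iF_Fi. Qed.

Definition Phi Z := f (iF Z).

Lemma Phi_bad Z : incr Z -> sub Z Y -> ~ le (Phi Z) (Phi (shift Z 1)).
Proof.
move=> h1 h2; have h3 : incr (shift Z 1) := incr_shift 1 h1.
have h4 : sub (shift Z 1) Y := sub_trans (sub_shift Z 1) h2.
by apply: bad h1 h2 (iF_Fi h1 h2) (iF_Fi h3 h4) _ _; rewrite /iF size_mkseq.
Qed.

Definition ctx s R :=
  [/\ sorted ltn s, forall y, y \in s -> inN Y y /\ y < R 0, incr R & sub R Y].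
Definition val s R := Phi (shift (catf s R) 1).

Lemma ctx_cat s R : ctx s R -> incr (catf s R) /\ sub (catf s R) Y.
Proof.
case=> h1 h2 h3 h4; split; first by apply: incr_catf => // y /h2 [].
by apply: sub_catf => // y /h2 [].
Qed.

Lemma ctx_cat1 s R : ctx s R ->
  incr (shift (catf s R) 1) /\ sub (shift (catf s R) 1) Y.
Proof.
move=> /ctx_cat [h1 h2]; split; first exact: incr_shift.
exact: sub_trans (sub_shift _ _) h2.
Qed.

Lemma ctx_hered s R R' : ctx s R -> incr R' -> sub R' R -> ctx s R'.
Proof.
case=> h1 h2 h3 h4 h5 h6; split => //; last exact: sub_trans h6 h4.
move=> y /h2 [a b]; split => //; exact: leq_trans b (sub_first h3 h6).
Qed.

Definition DD s (A : nat -> Prop) x :=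
  exists R', [/\ incr R', forall n, A (R' n) & le x (val s R')].

Lemma DD_down s A : downclosed (DD s A).
Proof. by move=> x y hxy [R' [h1 h2 h3]]; exists R'; split => //; exact: le_trans hxy h3. Qed.

Lemma DD_mono s R R' x : sub R' R -> DD s (inN R') x -> DD s (inN R) x.
Proof. by move=> hs [R'' [h1 h2 h3]]; exists R''; split => //; exact: sub_trans h2 hs. Qed.

Lemma DD_ext s A A' : (forall y, A y <-> A' y) -> forall x, DD s A x <-> DD s A' x.
Proof.
move=> he x; split => [[R' [h1 h2 h3]]|[R' [h1 h2 h3]]]; exists R'; split => // n.
  exact/he. exact/he.
Qed.

Definition stable s R := forall R', incr R' -> sub R' R ->
  forall x, DD s (inN R) x -> DD s (inN R') x.
Definition pconst s R := forall m, ismax (DD s (inN R)) m ->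
  forall R', incr R' -> sub R' R -> val s R' = m.
Definition Q s R := forall R'', incr R'' -> sub R'' R -> ctx s R'' ->
  stable s R'' /\ pconst s R''.

Lemma stable_hered s R R' : stable s R -> incr R' -> sub R' R -> stable s R'.
Proof. by move=> hs h1 h2 R'' g1 g2 x hx; apply: hs g1 (sub_trans g2 h2) _ (DD_mono h2 hx). Qed.

Lemma stable_eq s R R' : stable s R -> incr R' -> sub R' R ->
  forall x, DD s (inN R) x <-> DD s (inN R') x.
Proof. by move=> hs h1 h2 x; split; [exact: hs | exact: DD_mono]. Qed.

Lemma pconst_of s R : stable s R ->
  (forall m, ismax (DD s (inN R)) m -> forall R', incr R' -> sub R' R -> val s R' = m) ->
  forall R'', incr R'' -> sub R'' R -> pconst s R''.
Proof.
move=> hs hp R'' h1 h2 m [hm hmax] R' g1 g2.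
apply: hp g1 (sub_trans g2 h2); split; first by apply/(stable_eq hs h1 h2).
by move=> x /(stable_eq hs h1 h2) /hmax.
Qed.

Lemma val_cont s R : ctx s R -> forall Z, incr Z -> sub Z R -> exists k,
  forall Z', incr Z' -> sub Z' R -> mkseq Z' k = mkseq Z k -> val s Z' = val s Z.
Proof.
move=> hc Z hZ hZR; have hcZ := ctx_hered hc hZ hZR.
have [hW1 hW2] := ctx_cat1 hcZ.
exists (ik (shift (catf s Z) 1)).+1 => Z' h1 h2 e.
rewrite /val /Phi; congr f.
apply: iF_ext => //.
apply: mkseq_eqP => i hi; rewrite /shift /catf.
case: ltnP => h //.
apply: (mkseq_eqE e); rewrite ltnS; apply: leq_trans (leq_subr _ _) _.
by rewrite add1n.
Qed.

Lemma exists_stable s R : ctx s R -> exists R1, [/\ incr R1, sub R1 R & stable s R1].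
Proof.
move=> hc.
suff H : forall D R, ctx s R -> (forall x, D x <-> DD s (inN R) x) ->
    exists R1, [/\ incr R1, sub R1 R & stable s R1].
  exact: (H (DD s (inN R)) R hc).
elim/(well_founded_ind sdown_wf) => D IHD R0 hc0 hD.
case: (classic (stable s R0)) => hs.
  by exists R0; split => //; [case: hc0 | exact: sub_refl].
have [R' hR'] : exists R', incr R' /\ sub R' R0 /\
    exists x, DD s (inN R0) x /\ ~ DD s (inN R') x.
  apply: NNPP => hn; apply: hs => R' h1 h2 x hx; apply: NNPP => hx'.
  by apply: hn; exists R'; split => //; split => //; exists x.
case: hR' => h1 [h2 [x [hx hx']]].
have hsd : sdown (DD s (inN R')) D.
  split; [exact: DD_down | move=> y /(DD_mono h2) /hD // | exists x; split => //; exact/hD].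
have [R1 [g1 g2 g3]] := IHD _ hsd R' (ctx_hered hc0 h1 h2) (fun _ => iff_refl _).
by exists R1; split => //; exact: sub_trans g2 h2.
Qed.

Lemma directed s R : ctx s R -> stable s R -> forall a b, DD s (inN R) a ->
  DD s (inN R) b -> exists2 c, DD s (inN R) c & le a c /\ le b c.
Proof.
move=> hc hs a b ha hb; apply: NNPP => hn.
have [_ _ hR _] := hc.
have hcont : forall Z, incr Z -> sub Z R -> exists k, forall Z', incr Z' -> sub Z' R ->
    mkseq Z' k = mkseq Z k -> (le a (val s Z') <-> le a (val s Z)).
  move=> Z h1 h2; have [k hk] := val_cont hc h1 h2; exists k => Z' g1 g2 e.
  by rewrite (hk Z' g1 g2 e).
have [N [hN hNR [h|h]]] := NWc hR hcont.
  have [R3 [g1 g2 g3]] := hs N hN hNR b hb.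
  apply: hn; exists (val s R3); last by split => //; apply: h.
  by exists R3; split => //; [exact: sub_trans g2 hNR | exact: le_refl].
have [R3 [g1 g2 g3]] := hs N hN hNR a ha.
exact: h R3 g1 g2 g3.
Qed.

Lemma Q_hered s R R' : Q s R -> incr R' -> sub R' R -> Q s R'.
Proof. by move=> hq _ hs R'' h1 h2 h3; apply: hq R'' h1 (sub_trans h2 hs) h3. Qed.

Lemma exists_Q s R : incr R -> sub R Y -> exists R', [/\ incr R', sub R' R & Q s R'].
Proof.
move=> hR hRY.
case: (classic (sorted ltn s /\ forall y, y \in s -> inN Y y)) => [[hs hsY]|hn]; last first.
  exists R; split => //; first exact: sub_refl.
  by move=> R'' _ _ [h1 h2 _ _]; exfalso; apply: hn; split => // y /h2 [].
pose R0 := shift R (sumn s).+1.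
have hc0 : ctx s R0.
  split => //; [|exact: incr_shift| exact: sub_trans (sub_shift _ _) hRY].
  move=> y hy; split; first exact: hsY.
  rewrite /R0 /shift addn0; apply: leq_trans (incr_ge _ hR); rewrite ltnS; exact: mem_le_sumn.
have hR0 : sub R0 R by exact: sub_shift.
have [R1 [g1 g2 g3]] := exists_stable hc0.
case: (classic (exists m, ismax (DD s (inN R1)) m)) => [[m [hm hmax]]|hnm]; last first.
  exists R1; split => //; first exact: sub_trans g2 hR0.
  move=> R'' k1 k2 _; split; first exact: stable_hered g3 k1 k2.
  apply: pconst_of g3 _ R'' k1 k2 => m' hm'; exfalso; exact: hnm (ex_intro _ m' hm').
have hcont : forall Z, incr Z -> sub Z R1 -> exists k, forall Z', incr Z' -> sub Z' R1 ->
    mkseq Z' k = mkseq Z k -> (le m (val s Z') <-> le m (val s Z)).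
  move=> Z h1 h2; have [k hk] := val_cont (ctx_hered hc0 g1 g2) h1 h2; exists k => Z' l1 l2 e.
  by rewrite (hk Z' l1 l2 e).
have [N [hN hNR [h|h]]] := NWc g1 hcont; last first.
  by exfalso; have [R3 [k1 k2 k3]] := g3 N hN hNR m hm; exact: h R3 k1 k2 k3.
have hsN := stable_hered g3 hN hNR.
exists N; split => //; first exact: sub_trans hNR (sub_trans g2 hR0).
move=> R'' k1 k2 _; split; first exact: stable_hered hsN k1 k2.
apply: pconst_of hsN _ R'' k1 k2 => m' [hm' hmax'] R' l1 l2.
have hv : val s R' = m.
  apply: le_anti; last exact: h R' l1 l2.
  by apply: hmax; exists R'; split => //; [exact: sub_trans l2 hNR | exact: le_refl].
rewrite hv; apply: le_anti.
  by apply: hmax'; exact: g3 N hN hNR m hm.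
by apply: hmax; exact: DD_mono hNR hm'.
Qed.


Section WithN.
Variable N : nat -> nat.
Hypotheses (hN : incr N) (hNY : sub N Y).
Hypothesis hQN : forall k s, subseq s (mkseq N k) -> Q s (shift N k).

Definition aboveN (a : nat) (y : nat) := inN N y /\ a < y.
Definition I s := DD s (aboveN (last 0 s)).

Lemma key Z : incr Z -> sub Z N -> exists k,
  [/\ ctx (iF Z) (shift N k), Q (iF Z) (shift N k) &
      forall y, inN (shift N k) y <-> aboveN (last 0 (iF Z)) y].
Proof.
move=> hZ hZN; have hZY := sub_trans hZN hNY.
have hpos := ik_pos hZ hZY.
rewrite /iF; case: (ik Z) hpos => // L _.
have [j ej] := hZN L.
have hle : forall y, y \in mkseq Z L.+1 -> exists2 j', j' <= j & N j' = y.
  move=> y /mem_mkseqP [i hi <-]; have [j' ej'] := hZN i; exists j' => //.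
  by rewrite -(incr_leE _ _ hN) ej' ej; apply: incr_le hZ _.
exists j.+1; split.
- split; [exact: mkseq_sorted | | exact: incr_shift | exact: sub_trans (sub_shift _ _) hNY].
  move=> y hy; split; first by move: hy => /mem_mkseqP [i _ <-]; exact: hZY.
  have [j' hj' <-] := hle y hy; rewrite /shift addn0 incr_ltE //.
- apply: hQN; apply: subseq_mkseq; [exact: hN | exact: mkseq_sorted |].
  by move=> y /hle [j' hj' e]; exists j'.
- move=> y; rewrite last_mkseq -ej; split => [[n <-]|[[m <-] hlt]].
    split; first by exists (j.+1 + n).
    by rewrite /shift incr_ltE // ltnS leq_addr.
  rewrite incr_ltE // in hlt.
  by exists (m - j.+1); rewrite /shift subnKC.
Qed.

Lemma I_ideal Z : incr Z -> sub Z N -> is_ideal le (I (iF Z)).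
Proof.
move=> hZ hZN; have [k [hc hq he]] := key hZ hZN.
have [hs _] := hq (shift N k) (incr_shift k hN) (sub_refl _) hc.
have eq := DD_ext (iF Z) he.
split.
- exists (val (iF Z) (shift N k)); apply/eq; exists (shift N k).
  split; [exact: incr_shift | exact: sub_refl | exact: le_refl].
- move=> x y hxy /eq hy; apply/eq; exact: DD_down hxy hy.
- move=> x y /eq hx /eq hy; have [c hc' [h1 h2]] := directed hc hs hx hy.
  by exists c => //; apply/eq.
Qed.

Lemma I_pconst Z : incr Z -> sub Z N -> forall m, ismax (I (iF Z)) m ->
  forall R', incr R' -> (forall n, aboveN (last 0 (iF Z)) (R' n)) -> val (iF Z) R' = m.
Proof.
move=> hZ hZN m [hm hmax] R' h1 h2; have [k [hc hq he]] := key hZ hZN.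
have [_ hp] := hq (shift N k) (incr_shift k hN) (sub_refl _) hc.
have eq := DD_ext (iF Z) he.
apply: hp h1 _; first by split; [exact/eq | move=> x /eq /hmax].
by move=> n; apply/he.
Qed.

Lemma last_lt Z n : incr Z -> sub Z Y -> last 0 (iF Z) < Z (ik Z + n).
Proof.
move=> hZ hZY; have := ik_pos hZ hZY; rewrite /iF; case: (ik Z) => // L _.
by rewrite last_mkseq incr_ltE // ltnS leq_addr.
Qed.

Lemma succ_in Z : incr Z -> sub Z N -> I (iF Z) (f (iF (shift Z 1))).
Proof.
move=> hZ hZN; have hZY := sub_trans hZN hNY.
exists (shift Z (ik Z)); split; first exact: incr_shift.
  by move=> n; split; [exact: hZN | exact: last_lt].
by rewrite /val /iF catf_mkseq_shift; exact: le_refl.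
Qed.

Lemma self_notin Z : incr Z -> sub Z N -> ~ I (iF Z) (f (iF Z)).
Proof.
move=> hZ hZN [R'' [h1 h2 h3]]; have hZY := sub_trans hZN hNY.
have hpos := ik_pos hZ hZY.
have hlt : forall y, y \in iF Z -> y < R'' 0.
  have := (h2 0).2; rewrite /iF; case: (ik Z) hpos => // L _; rewrite last_mkseq => hL y hy.
  exact: leq_ltn_trans (mkseq_le_last hZ hy) hL.
pose Z'' := catf (iF Z) R''.
have hZ'' : incr Z''.
  by apply: incr_catf => //; rewrite /iF; exact: mkseq_sorted.
have hZ''Y : sub Z'' Y.
  apply: sub_catf; last by move=> n; have [h _] := h2 n; exact: sub_trans (fun _ => h) hNY 0.
  by move=> y /mem_mkseqP [i _ <-]; exact: hZY.
have e : iF Z'' = iF Z.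
  have := mkseq_catf (iF Z) R''; rewrite -/Z'' => e.
  by rewrite (@iF_uniq Z'' (size (iF Z))) // e; exact: iF_Fi.
by apply: (Phi_bad hZ'' hZ''Y); rewrite /Phi e.
Qed.

Lemma np_case N' : incr N' -> sub N' N ->
  (forall Z, incr Z -> sub Z N' -> ~ is_principal le (I (iF Z))) -> False.
Proof.
move=> hN' hN'N hnp.
have hstep : forall Z, incr Z -> sub Z N' -> sdown (I (iF (shift Z 1))) (I (iF Z)).
  move=> Z hZ hZN'; have hZN := sub_trans hZN' hN'N.
  have hZ1 := incr_shift 1 hZ; have hZ1N' := sub_trans (sub_shift Z 1) hZN'.
  have hZ1N := sub_trans hZ1N' hN'N.
  have hin := succ_in hZ hZN.
  have hnot := self_notin hZ1 hZ1N.
  have [hs|ht] := hchain (I_ideal hZ hZN) (hnp Z hZ hZN') (I_ideal hZ1 hZ1N)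
    (hnp _ hZ1 hZ1N').
    by exfalso; apply: hnot; apply: hs.
  split => //; [exact: DD_down | exists (f (iF (shift Z 1))); split => //].
have := wf_no_chain sdown_wf (a := fun n => I (iF (shift N' n))); apply => n.
have := hstep (shift N' n) (incr_shift n hN') (sub_shift _ _).
by rewrite shift_shift addn1.
Qed.

Lemma p_case N' : incr N' -> sub N' N ->
  (forall Z, incr Z -> sub Z N' -> is_principal le (I (iF Z))) -> False.
Proof.
move=> hN' hN'N hp.
have hN'Y := sub_trans hN'N hNY.
pose x0 := N' 0. pose Y' := shift N' 1.
pose C w := F (x0 :: w) /\ forall y, y \in w -> inN Y' y.
pose mm s := match excluded_middle_informative (exists m, ismax (I s) m) with
  | left h => proj1_sig (constructive_indefinite_description _ h)
  | right _ => f [::] end.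
pose g w := mm (x0 :: w).
have hY' : incr Y' := incr_shift 1 hN'.
have hY'N' : sub Y' N' := sub_shift _ _.
have hZ0 : forall Z, incr Z -> sub Z Y' ->
    incr (catf [:: x0] Z) /\ sub (catf [:: x0] Z) N'.
  move=> Z hZ hZY'; split.
    apply: incr_catf => // y; rewrite inE => /eqP ->.
    by have [m <-] := hZY' 0; rewrite /x0 /Y' /shift incr_ltE.
  apply: sub_catf; last exact: sub_trans hZY' hY'N'.
  by move=> y; rewrite inE => /eqP ->; exists 0.
have hiF0 : forall Z w, incr Z -> sub Z Y' -> C w -> w = mkseq Z (size w) ->
    iF (catf [:: x0] Z) = mkseq (catf [:: x0] Z) (1 + size w).
  move=> Z w hZ hZY' [hC _] hw; apply: iF_uniq.
  by rewrite -[1]/(size [:: x0]) mkseq_catf_add -hw.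
have hPhi : forall Z w, incr Z -> sub Z Y' -> C w -> w = mkseq Z (size w) ->
    Phi Z = g w.
  move=> Z w hZ hZY' hC hw.
  have [h1 h2] := hZ0 Z hZ hZY'.
  have h2N := sub_trans h2 hN'N.
  have e := hiF0 Z w hZ hZY' hC hw.
  have e' : iF (catf [:: x0] Z) = x0 :: w.
    by rewrite e -[1]/(size [:: x0]) mkseq_catf_add -hw.
  have hpr := hp _ h1 h2; rewrite e' in hpr.
  have hex : exists m, ismax (I (x0 :: w)) m by case: hpr => m hm hmax; exists m.
  rewrite /g /mm; case: excluded_middle_informative => [h|//].
  case: constructive_indefinite_description => m hm /=.
  have hpc := I_pconst h1 h2N; rewrite e' in hpc.
  have hZ0' : shift (catf [:: x0] Z) (1 + size w) = shift Z (size w).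
    by rewrite -shift_shift shift1_catf1.
  rewrite -(hpc m hm (shift Z (size w))); last first.
  - have hZN : sub Z N := sub_trans hZY' (sub_trans hY'N' hN'N).
    move=> n; split; first exact: hZN.
    have hik : ik (catf [:: x0] Z) = 1 + size w.
      by have := congr1 size e'; rewrite /iF size_mkseq add1n.
    have := last_lt n h1 (sub_trans h2 hN'Y); rewrite e' hik -addnA.
    by rewrite -[1]/(size [:: x0]) catf_ge.
  - exact: incr_shift.
  rewrite /val -e' e -hZ0' catf_mkseq_shift.
  by rewrite shift1_catf1.
have hfront : front C Y'.
  split.
  - move=> u [hu hin]; split => //; have [hs _] := hFel hu; exact: path_sorted hs.
  - move=> u v [hu _] [hv _] e; have := hFthin hu hv; rewrite /= -e => /(_ erefl).
    by case.
  - move=> Z hZ hZY'; have [h1 h2] := hZ0 Z hZ hZY'.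
    have h2Y := sub_trans h2 hN'Y.
    have hF0 := iF_Fi h1 h2Y; have hpos := ik_pos h1 h2Y.
    exists (ik (catf [:: x0] Z)).-1; split.
      move: hF0; rewrite /iF -(prednK hpos) -[_.+1]add1n -[1]/(size [:: x0]).
      by rewrite mkseq_catf_add.
    by move=> y /mem_mkseqP [i _ <-]; exact: hZY'.
have hRf : Rf C F.
  split; first by exists Y'.
  by exists x0 => w [].
have [Z [u [v [[hZ hZY' hu hv] [eu ev hle]]]]] := IH hRf hY' hfront g.
have hZ1 : incr (shift Z 1) := incr_shift 1 hZ.
have hZ1Y' : sub (shift Z 1) Y' := sub_trans (sub_shift Z 1) hZY'.
have e1 := hPhi Z u hZ hZY' hu eu.
have e2 := hPhi _ v hZ1 hZ1Y' hv ev.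
apply: (Phi_bad hZ (sub_trans hZY' (sub_trans hY'N' hN'Y))).
by rewrite e1 e2.
Qed.

End WithN.

Lemma step_false : False.
Proof.
have [N [hN hNY hQN]] := fusion Q_hered exists_Q hY (sub_refl Y).
pose c Z := is_principal le (I N (iF Z)).
have hcont : forall Z, incr Z -> sub Z N -> exists k, forall Z', incr Z' -> sub Z' N ->
    mkseq Z' k = mkseq Z k -> (c Z' <-> c Z).
  move=> Z h1 h2; exists (ik Z) => Z' g1 g2 e.
  by rewrite /c (iF_ext h1 (sub_trans h2 hNY) e).
have [N' [hN' hN'N [h|h]]] := NWc hN hcont.
  exact: (p_case hN hNY hQN hN' hN'N h).
exact: (np_case hN hNY hQN hN' hN'N h).
Qed.

End Step.

Lemma goodF_all F : goodF F.
Proof.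
elim/(well_founded_ind Rf_wf): F => F IH Y hY hF f.
apply: NNPP => hng.
case: (classic (F [::])) => hnil.
  apply: hng; exists Y, [::], [::]; split; first by split => //; exact: sub_refl.
  by split => //; exact: le_refl.
apply: (@step_false F Y f hY hF IH _ hnil).
move=> Z u v h1 h2 h3 h4 h5 h6 hle; apply: hng; exists Z, u, v; split; split => //.
Qed.

End Main.

Fixpoint pw (l : seq nat) : seq (seq nat) :=
  if l is x :: l' then [seq x :: s | s <- pw l'] ++ pw l' else [:: [::]].

Lemma nil_pw l : [::] \in pw l.
Proof. by elim: l => [|x l IH] //=; rewrite mem_cat IH orbT. Qed.

Lemma mem_pw l s : subseq s l -> s \in pw l.
Proof.
elim: l s => [|x l IH] s; first by rewrite subseq0 => /eqP ->.
case: s => [_|y s] /=; first by rewrite mem_cat nil_pw orbT.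
case: eqP => [->|_] h; rewrite mem_cat; apply/orP; [left|right; exact: IH].
by apply/mapP; exists s => //; exact: IH.
Qed.

Lemma sorted_le_last (s : seq nat) y : sorted ltn s -> y \in s -> y <= last 0 s.
Proof.
case/lastP: s => // s l hs; rewrite last_rcons mem_rcons inE => /orP [/eqP ->//|hy].
by apply: ltnW; exact: sorted_rcons_lt hs y hy.
Qed.

Lemma init_seg_mkseq Z s : incr Z -> init_seg s (inN Z) -> s = mkseq Z (size s).
Proof.
move=> hZ [hne hs hin hall].
have hl : last 0 s \in s by case: s hne {hs hin hall} => // a s _; exact: mem_last.
have [j ej] := hin _ hl.
suff e : s = mkseq Z j.+1 by rewrite {2}e size_mkseq.
apply: (irr_sorted_eq ltn_trans ltnn) => //; first exact: mkseq_sorted.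
move=> y; apply/idP/idP => [hy|/mem_mkseqP [i hi <-]].
  have [i ei] := hin _ hy; apply/mem_mkseqP; exists i => //.
  by rewrite ltnS -(incr_leE _ _ hZ) ei ej; exact: sorted_le_last.
by apply: hall; [exists i | rewrite -ej; apply: incr_le].
Qed.

Lemma mkseq_S_shift (Z : nat -> nat) n : mkseq Z n.+1 = Z 0 :: mkseq (shift Z 1) n.
Proof.
have := mkseq_catf_add (mkseq Z 1) (shift Z 1) n.
by rewrite catf_mkseq_shift size_mkseq add1n.
Qed.

Theorem corollary1p5 (T : Type) (le : T -> T -> Prop) :
  is_poset le -> wqo le -> nonprincipal_ideals_chain le -> bqo le.
Proof.
move=> hpo hwqo hch B [hB1 hB2 hB3 hB4] f.
pose base x := exists2 s, B s & x \in s.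
have hinf : forall n, exists m, n <= m /\ base m.
  move=> n; apply: NNPP => hn.
  have [s hs hns] := hB2 (pw (iota 0 n)).
  suff : s \in pw (iota 0 n) by rewrite (negbTE hns).
  apply: mem_pw.
  apply: sorted_subset_subseq; [exact: hB1 | exact: iota_ltn_sorted |].
  move=> y hy; rewrite mem_iota add0n /=; rewrite ltnNge; apply/negP => hny.
  by apply: hn; exists y; split => //; exists s.
have [Y [hY hYb]] := exists_incr hinf.
pose F u := B u /\ forall y, y \in u -> inN Y y.
have hfront : front F Y.
  split.
  - by move=> u [hu hin]; split => //; exact: hB1.
  - move=> u v [hu _] [hv _] e; apply: hB3 => // y hy.
    by move: hy; rewrite e; apply: mem_take.
  - move=> Z hZ hZY.
    have hX1 : infinite_nat_set (inN Z).
      by move=> n; exists (Z n); [exact: incr_ge | exists n].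
    have hX2 : forall x, inN Z x -> exists2 s, B s & x \in s.
      by move=> x [i <-]; have [k ek] := hZY i; rewrite -ek; exact: hYb.
    have [s hs hseg] := hB4 (inN Z) hX1 hX2.
    exists (size s); rewrite -(init_seg_mkseq hZ hseg); split => //.
    by move=> y; have [_ _ h _] := hseg; move=> /h [i <-]; exact: hZY.
have [Z [u [v [[hZ hZY [hu _] [hv _]] [eu ev hle]]]]] :=
  goodF_all hpo hwqo hch hY hfront f.
exists u, v; split => //.
exists (mkseq Z (size v).+1); split; first exact: mkseq_sorted.
  have hlt : size u < (size v).+1.
    rewrite ltnNge; apply/negP => hge.
    have e : v = u.
      apply: hB3 => // y; rewrite ev => /mem_mkseqP [i hi <-].
      by rewrite eu; apply/mem_mkseqP; exists i.+1 => //; apply: leq_trans hge.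
    have hu0 : 0 < size u by apply: leq_trans hge.
    have hv0 : 0 < size v by rewrite e.
    have h1 : nth 0 v 0 = Z 1 by rewrite {1}ev nth_mkseq.
    have h0 : nth 0 u 0 = Z 0 by rewrite {1}eu nth_mkseq.
    by move: h1; rewrite e h0 => /(incr_inj hZ).
  exists (size u); first by rewrite size_mkseq.
  by rewrite take_mkseq ?(ltnW hlt).
by rewrite mkseq_S_shift /= -ev.
Qed.
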